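(* Let $\mathcal K\subseteq\mathbb{Z}$ be finite and $\Omega=\bigcup_{k\in\mathcal K}(k\pi,\,k\pi+\pi)$. Then $\cot:\Omega\to\mathbb{R}$ is amenable.
   Context: Relative distance on $\mathbb{R}$: $\mathrm{dist}(x,y)=0$ if $x=y=0$, $\mathrm{dist}(x,y)=|\log(y/x)|$ if $xy>0$, and $\mathrm{dist}(x,y)=\infty$ otherwise. For a real analytic function $f$ on an open set $\Omega\subseteq\mathbb{R}$, not identically zero, the condition number is $\kappa(f,x)=0$ if $x=0$, $\kappa(f,x)=\infty$ if $x\neq0$ and $f(x)=0$, and $\kappa(f,x)=|x|\,|f'(x)|/|f(x)|$ otherwise; $\mu(f,x)=1+\kappa(f,x)$. $f:\Omega\to\mathbb{R}$ is amenable if there is $C>0$ such that for every $x\in\Omega$ with $\kappa(f,x)<\infty$, the set $B_x=\{y\in\mathbb{R}:\mathrm{dist}(y,x)<1/(C\mu(f,x))\}$ is contained in $\Omega$ and $\mu(f,y)\leq C\mu(f,x)$ for all $y\in B_x$. *)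

(* Defs.v *)
From Stdlib Require Import Reals Lra ZArith List.
From Coquelicot Require Import Coquelicot.
Open Scope R_scope.

Definition reldist (x y : R) : Rbar :=
  if Req_EM_T x 0 then
    (if Req_EM_T y 0 then Finite 0 else p_infty)
  else if Rlt_dec 0 (x * y) then Finite (Rabs (ln (y / x)))
  else p_infty.

Definition kappa (f : R -> R) (x : R) : Rbar :=
  if Req_EM_T x 0 then Finite 0
  else if Req_EM_T (f x) 0 then p_infty
  else Finite (Rabs x * Rabs (Derive f x) / Rabs (f x)).

Definition mu (f : R -> R) (x : R) : Rbar := Rbar_plus (Finite 1) (kappa f x).

Definition amenable (Omega : R -> Prop) (f : R -> R) : Prop :=
  exists C : R, 0 < C /\
    forall x : R, Omega x ->
    forall k : R, kappa f x = Finite k ->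
      let B := fun y => Rbar_lt (reldist y x) (Finite (1 / (C * (1 + k)))) in
      (forall y, B y -> Omega y) /\
      (forall y, B y -> Rbar_le (mu f y) (Finite (C * (1 + k)))).

Definition cot (x : R) : R := cos x / sin x.

Definition cotDomain (K : list Z) (x : R) : Prop :=
  exists k : Z, In k K /\ IZR k * PI < x /\ x < IZR k * PI + PI.

(* Main.v *)
Require Import Defs.
From Stdlib Require Import Reals ZArith List Lra Lia.
From Coquelicot Require Import Coquelicot.
Open Scope R_scope.

Lemma sin_lip a b : Rabs (sin b - sin a) <= Rabs (b - a).
Proof.
  destruct (MVT_abs sin cos a b) as [c [Hc _]].
  { intros; apply derivable_pt_lim_sin. }
  rewrite Hc. pose proof (COS_bound c).
  assert (Rabs (cos c) <= 1) by (apply Rabs_le; lra).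
  pose proof (Rabs_pos (b - a)). nra.
Qed.

Lemma g_lip x y : Rabs (sin y * cos y - sin x * cos x) <= Rabs (y - x).
Proof.
  pose proof (sin_lip (2*x) (2*y)).
  rewrite !sin_2a in H.
  replace (2 * sin y * cos y - 2 * sin x * cos x) with (2 * (sin y * cos y - sin x * cos x)) in H by ring.
  replace (2 * y - 2 * x) with (2 * (y - x)) in H by ring.
  rewrite !Rabs_mult in H. rewrite Rabs_pos_eq in H by lra. lra.
Qed.

Lemma Derive_cot y : sin y <> 0 -> Derive cot y = - / (sin y)^2.
Proof.
  intro H. apply is_derive_unique. unfold cot.
  auto_derive; auto.
  pose proof (sin2_cos2 y). unfold Rsqr in H0.
  field_simplify; auto. rewrite <- H0. field. auto.
Qed.

Lemma cot_nz x : cot x <> 0 -> sin x * cos x <> 0.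
Proof.
  unfold cot; intros H E. apply H.
  destruct (Rmult_integral _ _ E) as [E'|E']; rewrite E'.
  - unfold Rdiv. rewrite Rinv_0. ring.
  - unfold Rdiv; ring.
Qed.

Lemma kappa_cot y : y <> 0 -> sin y * cos y <> 0 ->
  kappa cot y = Finite (Rabs y / Rabs (sin y * cos y)).
Proof.
  intros Hy Hg.
  assert (Hs : sin y <> 0) by (intro E; apply Hg; rewrite E; ring).
  assert (Hc : cos y <> 0) by (intro E; apply Hg; rewrite E; ring).
  unfold kappa. destruct (Req_EM_T y 0); [contradiction|].
  destruct (Req_EM_T (cot y) 0) as [E|_].
  { unfold cot in E. exfalso. apply Hc.
    apply (Rmult_eq_reg_r (/ sin y)). unfold Rdiv in E. rewrite E. ring.
    apply Rinv_neq_0_compat; auto. }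
  f_equal. rewrite Derive_cot by auto. unfold cot.
  rewrite Rabs_Ropp, !Rabs_mult, Rabs_div by auto. rewrite Rabs_inv.
  rewrite <- RPow_abs.
  assert (Rabs (sin y) <> 0) by (apply Rabs_no_R0; auto).
  assert (Rabs (cos y) <> 0) by (apply Rabs_no_R0; auto).
  field. auto.
Qed.

Lemma near_ratio x y r : 0 < r <= 1/2 -> 0 < y * x -> Rabs (ln (x / y)) < r ->
  1 - 2*r <= y / x <= 1 + 2*r.
Proof.
  intros Hr Hyx Hl.
  assert (Hx : x <> 0) by (intro E; rewrite E in Hyx; lra).
  assert (Hy : y <> 0) by (intro E; rewrite E in Hyx; lra).
  assert (Ht : 0 < x / y).
  { replace (x / y) with (y * x / (y * y)) by (field; auto).
    apply Rdiv_lt_0_compat; auto. nra. }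
  set (t := x / y) in *. set (q := y / x).
  assert (Hqt : q * t = 1) by (unfold q, t; field; auto).
  apply Rabs_def2 in Hl. destruct Hl as [Hl1 Hl2].
  assert (E1 : t < exp r).
  { rewrite <- (exp_ln t) by auto. apply exp_increasing. lra. }
  assert (E2 : exp (- r) < t).
  { rewrite <- (exp_ln t) by auto. apply exp_increasing. lra. }
  pose proof (exp_ineq1_le (- r)).
  assert (Hee : exp r * exp (- r) = 1).
  { rewrite <- exp_plus. replace (r + - r) with 0 by ring. apply exp_0. }
  assert (Hq : 0 < q) by nra.
  split.
  - assert (q * exp r > 1) by nra.
    assert (q > exp (- r)) by nra. lra.
  - assert (q * (1 - r) < 1) by nra.
    nra.
Qed.

Theorem mainTheorem12 (K : list Z) : amenable (cotDomain K) cot.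
Proof.
  exists 8. split; [lra|].
  intros x [m [Hm [H1 H2]]] k0 Hk. simpl.
  pose proof PI_RGT_0 as HPI.
  assert (Hx0 : x <> 0).
  { intro E. subst x.
    assert (IZR m < 0) by nra. assert (-1 < IZR m) by nra.
    apply lt_IZR in H. replace (-1) with (IZR (-1)) in H0 by reflexivity.
    apply lt_IZR in H0. lia. }
  assert (Hg : sin x * cos x <> 0).
  { apply cot_nz. intro E. unfold kappa in Hk.
    destruct (Req_EM_T x 0); [contradiction|].
    destruct (Req_EM_T (cot x) 0); [discriminate|contradiction]. }
  rewrite kappa_cot in Hk by auto. injection Hk as Hk.
  set (G := Rabs (sin x * cos x)) in *.
  assert (HG : 0 < G) by (apply Rabs_pos_lt; auto).
  assert (Hax : 0 < Rabs x) by (apply Rabs_pos_lt; auto).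
  assert (Hk0 : 0 < k0) by (rewrite <- Hk; apply Rdiv_lt_0_compat; auto).
  assert (HxG : Rabs x = k0 * G) by (rewrite <- Hk; field; lra).
  set (r := 1 / (8 * (1 + k0))).
  assert (Hr8 : r * (8 * (1 + k0)) = 1) by (unfold r; field; lra).
  assert (Hr : 0 < r) by (unfold r; apply Rdiv_lt_0_compat; lra).
  assert (Hr2 : r <= 1/8) by (assert (0 < r * k0) by (apply Rmult_lt_0_compat; lra); nra).
  assert (Hrx : 2 * r * Rabs x <= G / 4) by (rewrite HxG; nra).
  assert (HGs : G <= Rabs (sin x)).
  { unfold G. rewrite Rabs_mult. pose proof (COS_bound x).
    assert (Rabs (cos x) <= 1) by (apply Rabs_le; lra).
    pose proof (Rabs_pos (sin x)). nra. }
  assert (HGl : G <= x - IZR m * PI).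
  { pose proof (sin_lip (IZR m * PI) x).
    rewrite (sin_eq_0_1 (IZR m * PI)) in H by (exists m; auto).
    rewrite Rminus_0_r in H. rewrite (Rabs_pos_eq (x - _)) in H by lra. lra. }
  assert (HGr : G <= IZR m * PI + PI - x).
  { pose proof (sin_lip (IZR (m + 1) * PI) x).
    rewrite (sin_eq_0_1 (IZR (m+1) * PI)) in H by (exists (m+1)%Z; auto).
    rewrite plus_IZR in H.
    rewrite Rminus_0_r in H. rewrite Rabs_minus_sym, (Rabs_pos_eq (_ - x)) in H by lra. lra. }
  assert (Key : forall y, Rbar_lt (reldist y x) (Finite r) ->
             y <> 0 /\ Rabs (y - x) <= G / 4 /\ Rabs y <= 5/4 * Rabs x).
  { intros y Hy. unfold reldist in Hy.
    destruct (Req_EM_T y 0).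
    { destruct (Req_EM_T x 0); [contradiction| simpl in Hy; contradiction]. }
    destruct (Rlt_dec 0 (y * x)) as [Hyx|]; [|simpl in Hy; contradiction].
    simpl in Hy. pose proof (near_ratio x y r ltac:(lra) Hyx Hy) as Hq.
    assert (Ey : y = x * (y / x)) by (field; auto).
    split; auto. split.
    - rewrite Ey. replace (x * (y / x) - x) with (x * (y / x - 1)) by ring.
      rewrite Rabs_mult. assert (Rabs (y / x - 1) <= 2 * r) by (apply Rabs_le; lra).
      nra.
    - rewrite Ey, Rabs_mult. rewrite (Rabs_pos_eq (y / x)) by lra. nra. }
  split.
  - intros y Hy. destruct (Key y Hy) as [_ [Hd _]].
    exists m. apply Rabs_le_between in Hd. split; auto. lra.
  - intros y Hy. destruct (Key y Hy) as [Hy0 [Hd Hyy]].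
    pose proof (g_lip x y) as Hl.
    pose proof (Rabs_triang_inv (sin x * cos x) (sin x * cos x - sin y * cos y)) as Ht.
    replace (sin x * cos x - (sin x * cos x - sin y * cos y)) with (sin y * cos y) in Ht by ring.
    rewrite Rabs_minus_sym in Hl.
    fold G in Ht.
    assert (Hgy : 3 * G / 4 <= Rabs (sin y * cos y)) by lra.
    assert (Hgy0 : sin y * cos y <> 0).
    { intro E. rewrite E, Rabs_R0 in Hgy. lra. }
    unfold mu. rewrite kappa_cot by auto. simpl.
    set (gy := Rabs (sin y * cos y)) in *.
    assert (Rabs y / gy <= 2 * k0).
    { apply Rle_div_l; [lra|]. nra. }
    lra.
Qed.
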